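(* Let $n\ge1$, $N=\{1,\dots,n\}$, $A=[0,1]$, and let $f$ be an OWA mechanism with weights $w_1,\dots,w_n\in[0,1]$, $\sum_j w_j=1$. Then $f$ is strategy-proof if and only if $w_j=1$ for some $j\in\{1,\dots,n\}$.
   Context: A mechanism is a map $f:A^n\to A$ from profiles $x=(x_i)_{i\in N}$ of reported locations to a facility location; agent $i$ with true location $x_i$ has utility $u(x_i,y)=1-|x_i-y|$ for facility location $y$. An OWA mechanism with weights $w_1,\dots,w_n$ returns $f(x)=\sum_{j=1}^n w_j x_{\pi(j)}$, where $\pi$ is a permutation of $N$ with $x_{\pi(1)}\le\dots\le x_{\pi(n)}$. $f$ is strategy-proof if for every $i\in N$, every $x_{-i}\in A^{n-1}$ and all $x_i,x_i'\in A$: $u(x_i,f(x_i,x_{-i}))\ge u(x_i,f(x_i',x_{-i}))$. *)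

(* Defs.v *)
From HB Require Import structures.
From mathcomp Require Import all_boot all_order all_algebra.
Set Implicit Arguments. Unset Strict Implicit. Unset Printing Implicit Defensive.
Import Order.TTheory GRing.Theory Num.Theory.
Local Open Scope ring_scope.

Definition in_A {R : realDomainType} (a : R) : bool := (0 <= a) && (a <= 1).

Definition profile_in_A {R : realDomainType} {n : nat} (x : 'I_n -> R) : Prop :=
  forall i, in_A (x i).

(* x_{pi(1)} <= ... <= x_{pi(n)} : the reported locations sorted increasingly
   (0-indexed: position j holds x_{pi(j+1)}). *)
Definition sorted_profile {R : realDomainType} {n : nat} (x : 'I_n -> R) : seq R :=
  sort <=%R [seq x i | i <- enum 'I_n].

Definition owa {R : realDomainType} {n : nat} (w : 'I_n -> R) (x : 'I_n -> R) : R :=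
  \sum_(j < n) w j * nth 0 (sorted_profile x) j.

Definition util {R : realDomainType} (a y : R) : R := 1 - `|a - y|.

Definition upd {R : realDomainType} {n : nat} (x : 'I_n -> R) (i : 'I_n) (a : R) :
  'I_n -> R := fun k => if k == i then a else x k.

Definition strategy_proof {R : realDomainType} {n : nat} (f : ('I_n -> R) -> R) : Prop :=
  forall (i : 'I_n) (x : 'I_n -> R) (a' : R),
    profile_in_A x -> in_A a' ->
    util (x i) (f x) >= util (x i) (f (upd x i a')).

(* Main.v *)
Require Import Defs.
From HB Require Import structures.
From mathcomp Require Import all_boot all_order all_algebra.
Import Order.TTheory GRing.Theory Num.Theory.
From mathcomp Require Import lra zify.
Local Open Scope ring_scope.
Section S.
Variable R : realDomainType.

Lemma cnt_ge (s : seq R) (k : nat) (P : pred R) :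
  sorted <=%R s -> (k < size s)%N -> (forall a b, a <= b -> P b -> P a) ->
  P (nth 0 s k) -> (k < count P s)%N.
Proof.
move=> ss ks Pd Pk.
rewrite -(cat_take_drop k.+1 s) count_cat.
have : all P (take k.+1 s).
  apply/(all_nthP 0) => m; rewrite size_takel // => hm.
  rewrite nth_take //.
  apply: (Pd _ _ _ Pk).
  apply: (sorted_leq_nth le_trans lexx 0 ss) => //.
  by rewrite inE; apply: leq_trans hm ks.
rewrite all_count => /eqP ->; rewrite size_takel //; apply: leq_addr.
Qed.

Lemma cnt_le (s : seq R) (k : nat) (P : pred R) :
  sorted <=%R s -> (k < size s)%N -> (forall a b, a <= b -> P b -> P a) ->
  ~~ P (nth 0 s k) -> (count P s <= k)%N.
Proof.
move=> ss ks Pd Pk.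
rewrite -(cat_take_drop k s) count_cat.
have -> : count P (drop k s) = 0%N.
  apply/eqP; rewrite -leqn0 leqNgt -has_count; apply/negP => /(has_nthP 0) [m].
  rewrite size_drop nth_drop => hm Pm; move/negP: Pk; apply; apply: (Pd _ _ _ Pm).
  apply: (sorted_leq_nth le_trans lexx 0 ss) => //; rewrite ?inE //.
  - by rewrite -ltn_subRL.
  - exact: leq_addr.
rewrite addn0; apply: leq_trans (count_size _ _) _; by rewrite size_takel // ltnW.
Qed.
End S.

Section M.
Variable R : realFieldType.
Variable n : nat.
Implicit Types x : 'I_n -> R.

Lemma sp_sorted x : sorted <=%R (sorted_profile x).
Proof. exact: sort_sorted le_total _. Qed.

Lemma size_sp x : size (sorted_profile x) = n.
Proof. by rewrite /sorted_profile size_sort size_map size_enum_ord. Qed.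

Lemma count_sp (P : pred R) x :
  count P (sorted_profile x) = count (fun k => P (x k)) (enum 'I_n).
Proof.
rewrite /sorted_profile.
have /permP -> : perm_eq (sort <=%R [seq x i | i <- enum 'I_n]) [seq x i | i <- enum 'I_n].
  by rewrite perm_sort perm_refl.
by rewrite count_map.
Qed.

Lemma ostat_sp (j i : 'I_n) x a :
  `|x i - nth 0 (sorted_profile x) j| <= `|x i - nth 0 (sorted_profile (upd x i a)) j|.
Proof.
set y := nth 0 _ j; set y' := nth 0 _ j.
have js : (j < size (sorted_profile x))%N by rewrite size_sp.
have js' : (j < size (sorted_profile (upd x i a)))%N by rewrite size_sp.
case: (ltgtP (x i) y) => h.
- have yy : y <= y'.
    rewrite leNgt; apply/negP => hy.
    have c1 : (j < count (fun b : R => (b < y)%R) (sorted_profile (upd x i a)))%N.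
      apply: cnt_ge (sp_sorted _) js' _ hy => b c bc cy; exact: le_lt_trans bc cy.
    have c2 : (count (fun b : R => (b < y)%R) (sorted_profile x) <= j)%N.
      apply: cnt_le (sp_sorted _) js _ _; first by move=> b c bc cy; exact: le_lt_trans bc cy.
      by rewrite ltxx.
    have c3 : (count (fun b : R => (b < y)%R) (sorted_profile (upd x i a)) <= count (fun b : R => (b < y)%R) (sorted_profile x))%N.
      rewrite !count_sp; apply: sub_count => k /=; rewrite /upd; case: eqP => // -> _; exact: h.
    by move: (leq_trans (leq_trans c1 c3) c2); rewrite ltnn.
  rewrite !ler0_norm ?subr_le0 ?(ltW h) ?(ltW (lt_le_trans h yy)) //.
  by rewrite !opprB lerD2r.
- have yy : y' <= y.
    rewrite leNgt; apply/negP => hy.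
    have c1 : (j < count (fun b : R => (b <= y)%R) (sorted_profile x))%N.
      apply: cnt_ge (sp_sorted _) js _ _; last by rewrite lexx.
      move=> b c bc cy; exact: le_trans bc cy.
    have c2 : (count (fun b : R => (b <= y)%R) (sorted_profile (upd x i a)) <= j)%N.
      apply: cnt_le (sp_sorted _) js' _ _; first by move=> b c bc cy; exact: le_trans bc cy.
      by rewrite -ltNge.
    have c3 : (count (fun b : R => (b <= y)%R) (sorted_profile x) <= count (fun b : R => (b <= y)%R) (sorted_profile (upd x i a)))%N.
      rewrite !count_sp; apply: sub_count => k /=; rewrite /upd; case: eqP => // -> hk.
      by move: h; rewrite ltNge hk.
    by move: (leq_trans (leq_trans c1 c3) c2); rewrite ltnn.
  rewrite !ger0_norm ?subr_ge0 ?(ltW h) ?(le_trans yy (ltW h)) //.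
  by rewrite lerD2l lerN2.
- by rewrite h subrr normr0.
Qed.

Lemma nth_map_enum x (m : nat) (hm : (m < n)%N) :
  nth 0 [seq x i | i <- enum 'I_n] m = x (Ordinal hm).
Proof.
rewrite (nth_map (Ordinal hm)) ?size_enum_ord //; congr (x _); apply: val_inj.
by rewrite /= nth_enum_ord.
Qed.

Lemma owa_mono (w : 'I_n -> R) x :
  (forall a b : 'I_n, (a <= b)%N -> x a <= x b) ->
  owa w x = \sum_(k < n) w k * x k.
Proof.
move=> mono; rewrite /owa.
have -> : sorted_profile x = [seq x i | i <- enum 'I_n].
  apply: sorted_sort; first exact: le_trans.
  apply/(sortedP 0) => m; rewrite size_map size_enum_ord => hm.
  have hm' : (m < n)%N by apply: ltnW.
  rewrite (nth_map_enum x _ hm) (nth_map_enum x _ hm'); apply: mono => /=; exact: leqnSn.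
apply: eq_bigr => k _; congr (_ * _).
rewrite (nth_map_enum x _ (ltn_ord k)); congr (x _); exact: val_inj.
Qed.
End M.


Lemma owa_ext (R : realFieldType) n (w f g : 'I_n -> R) : f =1 g -> owa w f = owa w g.
Proof. by move=> fg; rewrite /owa /sorted_profile (eq_map fg). Qed.

Theorem proposition2 (R : realFieldType) (n : nat) (w : 'I_n -> R) :
  (0 < n)%N ->
  (forall j, 0 <= w j <= 1) ->
  \sum_(j < n) w j = 1 ->
  (strategy_proof (owa w) <-> exists j : 'I_n, w j = 1).
Proof.
move=> n0 w01 wsum; split; last first.
  move=> [j hj] i x a xA aA.
  have wz : forall k, k != j -> w k = 0.
    apply: psumr_eq0P; first by move=> k _; case/andP: (w01 k).
    by move: wsum; rewrite (bigD1 j) //= hj => /(canRL (addKr 1)); rewrite addNr.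
  have owaE : forall f, owa w f = nth 0 (sorted_profile f) j.
    move=> f; rewrite /owa (bigD1 j) //= big1 ?hj ?mul1r ?addr0 // => k kj.
    by rewrite wz // mul0r.
  by rewrite /util !owaE lerD2l lerN2; apply: ostat_sp.
move=> sp.
case: (pickP (fun j => w j == 1)) => [j /eqP hj | hno]; first by exists j.
exfalso.
case: (pickP (fun k => 0 < w k)) => [k0 hk0 | hz]; last first.
  have : \sum_(j < n) w j = 0.
    apply: big1 => k _; apply/eqP; rewrite eq_le; case/andP: (w01 k) => -> _.
    by rewrite andbT leNgt hz.
  by rewrite wsum => /eqP; rewrite oner_eq0.
case: (@arg_minnP _ k0 (fun k => 0 < w k) (fun k : 'I_n => nat_of_ord k) hk0) => j hj jmin.
have wlow : forall k : 'I_n, (k < j)%N -> w k = 0.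
  move=> k kj; apply/eqP; rewrite eq_le; case/andP: (w01 k) => -> _.
  rewrite andbT leNgt; apply/negP => hk; move: (jmin k hk); rewrite leqNgt kj //.
have wj1 : w j < 1.
  by rewrite lt_neqAle; case/andP: (w01 j) => _ ->; rewrite andbT; move: (hno j) => /= ->.
have rest : \sum_(k | k != j) w k = 1 - w j.
  by move: wsum; rewrite (bigD1 j) //= => <-; rewrite addrC addrK.
pose xd (d : R) := fun k : 'I_n => if (k < j)%N then 0 else if (nat_of_ord k == nat_of_ord j) then d else 1.
have xd_mono : forall d, 0 <= d <= 1 -> forall a b : 'I_n, (a <= b)%N -> xd d a <= xd d b.
  move=> d /andP [d0 d1] a b ab; rewrite /xd.
  case: (ltngtP a j) => aj; case: (ltngtP b j) => bj //=; try lia; try lra.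
have owaE : forall d, 0 <= d <= 1 -> owa w (xd d) = w j * d + (1 - w j).
  move=> d hd; rewrite owa_mono; last exact: xd_mono.
  rewrite (bigD1 j) //= {1}/xd ltnn eqxx; congr (_ + _).
  rewrite -rest; apply: eq_bigr => k kj; rewrite /xd.
  case: (ltngtP k j) => kj'.
  - by rewrite wlow // mul0r.
  - by rewrite mulr1.
  - by move/val_inj: kj' => kj'; rewrite kj' eqxx in kj.
set c : R := (1 - w j) / 2.
have c01 : 0 <= c <= 1 by apply/andP; split; rewrite /c; lra.
have xA : profile_in_A (xd c).
  move=> k; rewrite /in_A /xd; case: ifP => _; first by rewrite lexx ler01.
  by case: ifP => _ //; rewrite lexx ler01.
have := sp j (xd c) 0 xA.
have -> : owa w (upd (xd c) j 0) = owa w (xd 0).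
  apply: owa_ext => k; rewrite /upd /xd; case: (eqVneq k j) => [->|kj]; rewrite ?ltnn ?eqxx //.
  by rewrite (inj_eq val_inj) (negbTE kj).
rewrite !owaE //; last by rewrite lexx ler01.
have -> : xd c j = c by rewrite /xd ltnn eqxx.
rewrite /util /in_A lexx ler01 => /(_ isT).
rewrite mulr0 add0r.
have wj0 : 0 < w j := hj.
rewrite !ler0_norm; [|rewrite /c; nra|rewrite /c; lra].
rewrite /c; nra.
Qed.
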